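(* For $n\ge2$, the map $T_n$ restricts to a surjective map $T_n:X_n\setminus U_{12}\to\mathbb{C}^{3n-3}\setminus Z_{12}$.
   Context: $X_n=SL(2,\mathbb{C})^{\times n}$. The Magnus trace map $T_n:X_n\to\mathbb{C}^{3n-3}$ is $T_n(A_1,\dots,A_n)=(t_1,t_2,t_{12},t_3,t_{13},t_{23},\dots,t_n,t_{1n},t_{2n})$, with $t_j=\mathsf{tr}(A_j)$, $t_{jk}=\mathsf{tr}(A_jA_k)$ (for $n=2$ this is $(t_1,t_2,t_{12})$). Writing points of $\mathbb{C}^{3n-3}$ as $\mathbf{z}=(z_1,z_2,z_{12},\dots,z_n,z_{1n},z_{2n})$, set $\sigma_{12}(\mathbf{z})=z_1^2+z_2^2+z_{12}^2-z_1z_2z_{12}-4$, $Z_{12}=\{\mathbf{z}:\sigma_{12}(\mathbf{z})=0\}$ and $U_{12}=\{A\in X_n: t_1^2+t_2^2+t_{12}^2-t_1t_2t_{12}-4=0\}$ (equivalently $\mathsf{tr}(A_1A_2A_1^{-1}A_2^{-1})=2$). *)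

(* Defs.v *)
(* Complex numbers are R[i] = complex R for R : realType
   (every realType is the real numbers, so R[i] is C). *)
From HB Require Import structures.
From mathcomp Require Import all_boot all_order all_algebra.
From mathcomp Require Import complex.
From mathcomp Require Import reals.
Set Implicit Arguments. Unset Strict Implicit. Unset Printing Implicit Defensive.
Import Order.TTheory GRing.Theory Num.Theory.
Local Open Scope ring_scope.

Section Defs.
Variable R : realType.
Local Notation C := R[i].

(* The point A = (A_1,...,A_n) of X_n = SL(2,C)^n : an n-tuple of 2x2
   complex matrices, each of determinant 1.  Here A_j (1-based) is the
   entry of 0-based index j-1. *)
Definition inX (n : nat) (A : n.-tuple 'M[C]_2) : Prop :=
  forall i : 'I_n, \det (tnth A i) = 1.

Definition Amat (n : nat) (A : n.-tuple 'M[C]_2) (m : nat) : 'M[C]_2 :=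
  nth 1%:M A m.

(* coordinate k (0-based) of the Magnus trace map:
   block b = k %/ 3, r = k %% 3;
   block 0 : (t_1, t_2, t_12);
   block b >= 1 : (t_j, t_1j, t_2j) with j = b + 2 (1-based). *)
Definition magnus_coord (n : nat) (A : n.-tuple 'M[C]_2) (k : nat) : C :=
  let b := (k %/ 3)%N in
  let r := (k %% 3)%N in
  if b == 0%N then
    (if r == 0%N then \tr (Amat A 0)
     else if r == 1%N then \tr (Amat A 1)
     else \tr (Amat A 0 *m Amat A 1))
  else
    let m := b.+1 in
    (if r == 0%N then \tr (Amat A m)
     else if r == 1%N then \tr (Amat A 0 *m Amat A m)
     else \tr (Amat A 1 *m Amat A m)).

Definition magnus (n : nat) (A : n.-tuple 'M[C]_2) : (3 * n - 3).-tuple C :=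
  [tuple magnus_coord A (nat_of_ord k) | k < 3 * n - 3].

Definition sigma12 (m : nat) (z : m.-tuple C) : C :=
  let z1 := nth 0 z 0 in let z2 := nth 0 z 1 in let z12 := nth 0 z 2 in
  z1 ^+ 2 + z2 ^+ 2 + z12 ^+ 2 - z1 * z2 * z12 - 4.

Definition inZ12 (m : nat) (z : m.-tuple C) : Prop := sigma12 z = 0.

Definition inU12 (n : nat) (A : n.-tuple 'M[C]_2) : Prop :=
  let t1 := \tr (Amat A 0) in let t2 := \tr (Amat A 1) in
  let t12 := \tr (Amat A 0 *m Amat A 1) in
  t1 ^+ 2 + t2 ^+ 2 + t12 ^+ 2 - t1 * t2 * t12 - 4 = 0.

End Defs.

(* Main.v *)
Require Import Defs.
From HB Require Import structures.
From mathcomp Require Import all_boot all_order all_algebra.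
From mathcomp Require Import complex.
From mathcomp Require Import reals.
From mathcomp Require Import ring zify.
Import Order.TTheory GRing.Theory Num.Theory.
Local Open Scope ring_scope.
Section M.
Variable F : fieldType.
Definition mx2 (a b c d : F) : 'M[F]_2 :=
  \matrix_(i, j) if i == 0 then (if j == 0 then a else b) else (if j == 0 then c else d).
Lemma det_mx2 a b c d : \det (mx2 a b c d) = a * d - b * c.
Proof.
rewrite (expand_det_row _ ord0) !big_ord_recl big_ord0 /cofactor !det_mx11.
rewrite !mxE /=. ring.
Qed.
Lemma tr_mx2 a b c d : \tr (mx2 a b c d) = a + d.
Proof. by rewrite /mxtrace !big_ord_recl big_ord0 !mxE /= addr0. Qed.
Lemma mul_mx2 a b c d e f g h : mx2 a b c d *m mx2 e f g h =
  mx2 (a*e+b*g) (a*f+b*h) (c*e+d*g) (c*f+d*h).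
Proof.
apply/matrixP=> i j; rewrite !mxE !big_ord_recl big_ord0 !mxE /=.
by case: i => [[|[|//]] ?]; case: j => [[|[|//]] ?] /=; rewrite addr0.
Qed.

Variables z1 z2 z12 b : F.
Definition sig := z1^+2 + z2^+2 + z12^+2 - z1 * z2 * z12 - 4.
Definition A1 := mx2 z1 (-1) 1 0.
Definition A2 := mx2 0 b (b - z12) z2.

Lemma A1_prop : \det A1 = 1 /\ \tr A1 = z1.
Proof. rewrite /A1 det_mx2 tr_mx2; split; ring. Qed.
Lemma A2_prop : b * (z12 - b) = 1 -> \det A2 = 1 /\ \tr A2 = z2 /\ \tr (A1 *m A2) = z12.
Proof.
move=> hb; rewrite /A1 /A2 mul_mx2 !det_mx2 !tr_mx2; split; last split; try ring.
by rewrite -hb; ring.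
Qed.

Definition det3 (a b c d e f g h k : F) := a*(e*k - f*h) - b*(d*k - f*g) + c*(d*h - e*g).

Section X.
Variables al be ga t : F.
Definition x011 := al + be * z1.
Definition x012 := - be + ga * b.
Definition x021 := be + ga * (b - z12).
Definition x022 := al + ga * z2.
Definition d11 := z12 - b *+ 2.
Definition d12 := z1 * b - z2.
Definition d21 := - (b - z12) * z1 - z2.
Definition d22 := b *+ 2 - z12.
Definition dX0 := x011 * x022 - x012 * x021.
Definition Xm := mx2 (x011 + t * d11) (x012 + t * d12) (x021 + t * d21) (x022 + t * d22).

Lemma X_prop p q r : b * (z12 - b) = 1 -> sig != 0 ->
  2 * al + z1 * be + z2 * ga = p ->
  z1 * al + (z1^+2 - 2) * be + z12 * ga = q ->
  z2 * al + z12 * be + (z2^+2 - 2) * ga = r ->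
  t ^+ 2 = (dX0 - 1) / sig ->
  [/\ \det Xm = 1, \tr Xm = p, \tr (A1 *m Xm) = q & \tr (A2 *m Xm) = r].
Proof.
move=> hb hs Hp Hq Hr ht.
rewrite /Xm /A1 /A2 !mul_mx2 det_mx2 !tr_mx2; split.
- have -> : (x011 + t * d11) * (x022 + t * d22) - (x012 + t * d12) * (x021 + t * d21)
     = dX0 - t^+2 * (z1^+2 * (b * (z12 - b)) + z2^+2 + z12^+2 - z1 * z2 * z12 - 4 * (b * (z12 - b))).
    rewrite /dX0 /x011 /x012 /x021 /x022 /d11 /d12 /d21 /d22; ring.
  rewrite hb ht -/sig.
  have -> : z1 ^+ 2 * 1 + z2 ^+ 2 + z12 ^+ 2 - z1 * z2 * z12 - 4 * 1 = sig by rewrite /sig; ring.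
  by rewrite divfK //; ring.
- rewrite -Hp /x011 /x022 /d11 /d22; ring.
- rewrite -Hq /x011 /x012 /x021 /x022 /d11 /d12 /d21 /d22; ring.
- rewrite -Hr.
  have -> : 2 = 2 * (b * (z12 - b)) by rewrite hb mulr1.
  rewrite /x011 /x012 /x021 /x022 /d11 /d12 /d21 /d22; ring.
Qed.
End X.
Section Cr.
Variables p q r : F.
Definition Gd := - (2 * sig).
Definition alc := det3 p z1 z2 q (z1^+2 - 2) z12 r z12 (z2^+2 - 2) / Gd.
Definition bec := det3 2 p z2 z1 q z12 z2 r (z2^+2 - 2) / Gd.
Definition gac := det3 2 z1 p z1 (z1^+2 - 2) q z2 z12 r / Gd.
Lemma cramer : (2:F) != 0 -> sig != 0 ->
  [/\ 2 * alc + z1 * bec + z2 * gac = p,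
   z1 * alc + (z1^+2 - 2) * bec + z12 * gac = q &
   z2 * alc + z12 * bec + (z2^+2 - 2) * gac = r].
Proof.
move=> h2 hs.
have hG : Gd != 0 by rewrite /Gd oppr_eq0 mulf_neq0.
rewrite /alc /bec /gac; split; apply: (mulIf hG); move: hG;
  rewrite /Gd /sig /det3 => hG; field; done.
Qed.
End Cr.
End M.

Arguments sig {F}. Arguments A1 {F}. Arguments A2 {F}. Arguments Xm {F}.
Arguments dX0 {F}. Arguments alc {F}. Arguments bec {F}. Arguments gac {F}.
Arguments cramer {F}. Arguments A1_prop {F}. Arguments A2_prop {F}. Arguments X_prop {F}.

Theorem theorem5p4 (R : realType) (n : nat) (hn : (2 <= n)%N) :
  (forall A : n.-tuple 'M[R[i]]_2,
      inX A -> ~ inU12 A -> ~ inZ12 (magnus A)) /\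
  (forall z : (3 * n - 3).-tuple R[i],
      ~ inZ12 z ->
      exists A : n.-tuple 'M[R[i]]_2, inX A /\ ~ inU12 A /\ magnus A = z).
Proof.
have nth_mag : forall (A : n.-tuple 'M[R[i]]_2) k, (k < 3*n-3)%N ->
    nth 0 (magnus A) k = magnus_coord A k.
  move=> A k hk.
  by rewrite -[nth _ _ k]/(nth 0 (magnus A) (Ordinal hk)) -tnth_nth tnth_mktuple.
have h3 : (2 < 3*n-3)%N by lia.
split.
  move=> A _ hU hZ; apply: hU; move: hZ.
  rewrite /inZ12 /sigma12 (nth_mag A 0) ?(nth_mag A 1) ?(nth_mag A 2) //; lia.
move=> z hz.
set z1 := nth 0 z 0; set z2 := nth 0 z 1; set z12 := nth 0 z 2.
have hs : sig z1 z2 z12 != 0 by apply/eqP => E; apply: hz; exact: E.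
have h2 : (2 : R[i]) != 0 by rewrite pnatr_eq0.
pose s := sqrtc (z12^+2 - 4).
pose b := (z12 + s) / 2.
have hb : b * (z12 - b) = 1.
  have -> : b * (z12 - b) = (z12^+2 - s^+2) / 4 by rewrite /b; field.
  by rewrite /s sqr_sqrtc; field.
pose w p q r := (dX0 z1 z2 z12 b (alc z1 z2 z12 p q r) (bec z1 z2 z12 p q r)
   (gac z1 z2 z12 p q r) - 1) / sig z1 z2 z12.
pose Xf p q r := Xm z1 z2 z12 b (alc z1 z2 z12 p q r) (bec z1 z2 z12 p q r)
   (gac z1 z2 z12 p q r) (sqrtc (w p q r)).
have HX : forall p q r, [/\ \det (Xf p q r) = 1, \tr (Xf p q r) = p,
    \tr (A1 z1 *m Xf p q r) = q & \tr (A2 z2 z12 b *m Xf p q r) = r].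
  move=> p q r; have [c1 c2 c3] := cramer z1 z2 z12 p q r h2 hs.
  by apply: X_prop => //; rewrite sqr_sqrtc.
have [dA1 tA1] := A1_prop z1.
have [dA2 [tA2 tA12]] := A2_prop z1 z2 z12 b hb.
pose g (m : nat) := if m == 0%N then A1 z1 else if m == 1%N then A2 z2 z12 b
  else Xf (nth 0 z (3 * m.-1)) (nth 0 z (3 * m.-1).+1) (nth 0 z (3 * m.-1).+2).
exists [tuple g (val k) | k < n].
have hA : forall m, (m < n)%N -> Amat [tuple g (val k) | k < n] m = g m.
  move=> m hm.
  by rewrite /Amat -[nth _ _ m]/(nth 1%:M _ (Ordinal hm)) -tnth_nth tnth_mktuple.
split; [|split].
- move=> k; rewrite tnth_mktuple /g.
  case: ifP => _; first by [].
  case: ifP => _; first by [].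
  by case: (HX (nth 0 z (3 * k.-1)) (nth 0 z (3 * k.-1).+1) (nth 0 z (3 * k.-1).+2)).
- rewrite /inU12 !hA //; last by lia.
  rewrite /g /= tA1 tA2 tA12 => E; move/eqP: hs; apply; exact: E.
- apply: eq_from_tnth => k; rewrite tnth_mktuple (tnth_nth 0) /magnus_coord.
  have hk := ltn_ord k.
  have hkd := divn_eq k 3.
  have hr : (k %% 3 < 3)%N by rewrite ltn_mod.
  case: eqP => hb0.
    have hkk : nat_of_ord k = (k %% 3)%N by lia.
    rewrite !hA //; last by lia.
    rewrite /g /=.
    case: eqP => h0; first by rewrite tA1 hkk h0.
    case: eqP => h1; first by rewrite tA2 hkk h1.
    by rewrite tA12 hkk; congr (nth _ _ _); lia.
  have hm : ((k %/ 3).+1 < n)%N by lia.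
  rewrite !hA //; last by lia.
  have -> : g (k %/ 3).+1 = Xf (nth 0 z (3 * (k %/ 3))) (nth 0 z (3 * (k %/ 3)).+1)
                            (nth 0 z (3 * (k %/ 3)).+2).
    rewrite /g /=; case: eqP => //= h; lia.
  case: (HX (nth 0 z (3 * (k %/ 3))) (nth 0 z (3 * (k %/ 3)).+1)
            (nth 0 z (3 * (k %/ 3)).+2)) => d1 t1 t2 t3.
  case: eqP => h0; first by rewrite t1; congr (nth _ _ _); lia.
  case: eqP => h1; first by rewrite t2; congr (nth _ _ _); lia.
  by rewrite t3; congr (nth _ _ _); lia.
Qed.
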